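(* Let $Y$ be the quotient of $(\mathbb R_{>0})^s\times E$ by a non-degenerate twisted diagonal action of $G=\mathbb Z^s\ltimes\mathcal L$ with data $(\xi_1,\dots,\xi_s)$, $\mathcal L$, $(A_1,\dots,A_s)$, and let $\mu_i\in GL(k,\mathbb Z)$ be the matrix of $A_i$ in the basis $\mathcal B$. Then (1) there is a fibration $p:Y\to\mathbb T^s$ with fiber $\mathbb T^k$ and monodromy matrices $\mu_1,\dots,\mu_s$; (2) this fibration admits a cross-section.
   Context: $E$ is a real vector space of dimension $k$ with basis $\mathcal B$; $\mathcal L$ is the free abelian group generated by $\mathcal B$. $\xi_1,\dots,\xi_s\in(\mathbb R_{>0})^s$, $\xi_i=(\xi_i^{(1)},\dots,\xi_i^{(s)})$; $A_1,\dots,A_s\in GL(E)$ commute pairwise and each restricts to an automorphism of $\mathcal L$. $G=\mathbb Z^s\ltimes\mathcal L$ with the $i$-th generator $\tau_i$ acting on $\mathcal L$ by $A_i$. The twisted diagonal action on $(\mathbb R_{>0})^s\times E$: $\mathcal L$ acts by translations on $E$, and $\tau_i(x_1,\dots,x_s,v)=(\xi_i^{(1)}x_1,\dots,\xi_i^{(s)}x_s,A_i(v))$. Non-degenerate means the vectors $(\log\xi_i^{(1)},\dots,\log\xi_i^{(s)})$, $1\le i\le s$, form a basis of $\mathbb R^s$. *)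

(* Defs.v *)
From HB Require Import structures.
From Stdlib Require Import Relation_Operators.
From mathcomp Require Import all_boot all_order all_algebra.
From mathcomp Require Import all_classical all_reals all_analysis.

Set Implicit Arguments. Unset Strict Implicit. Unset Printing Implicit Defensive.
Import Order.TTheory GRing.Theory Num.Theory.
Import numFieldNormedType.Exports.
Local Open Scope classical_set_scope.
Local Open Scope ring_scope.

(* Conventions: E is identified with R^k (column vectors 'cV[R]_k) through
   the basis B, so that the lattice L is 'cV[int]_k and A_i is the matrix
   mu i acting by v |-> mu i *m v.  (R_{>0})^s is the open positive orthant
   of 'cV[R]_s. *)

Definition is_quotient_map {X Y : topologicalType} (D : set X)
    (rel : X -> X -> Prop) (q : X -> Y) : Prop :=
  [/\ (forall y, exists x, D x /\ q x = y),
      (forall x x', D x -> D x' -> (q x = q x' <-> rel x x')) &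
      (forall U : set Y,
          open U <-> exists V : set X, open V /\ D `&` (q @^-1` U) = D `&` V)].

Definition intmx {R : realType} {m n : nat} (M : 'M[int]_(m, n)) : 'M[R]_(m, n) :=
  map_mx (fun z : int => z%:~R) M.

Definition lattice_rel {R : realType} (n : nat) (x x' : 'cV[R]_n) : Prop :=
  exists l : 'cV[int]_n, x' = x + intmx l.

Definition pos_part {R : realType} (s k : nat) : set ('cV[R]_s * 'cV[R]_k) :=
  [set z | forall j : 'I_s, 0 < (z.1 : 'cV[R]_s) j 0].

Definition tau {R : realType} {s k : nat} (xi : 'I_s -> 'I_s -> R)
    (mu : 'I_s -> 'M[int]_k) (i : 'I_s) (z : 'cV[R]_s * 'cV[R]_k)
    : 'cV[R]_s * 'cV[R]_k :=
  (\col_j (xi i j * z.1 j 0), intmx (mu i) *m z.2).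

Definition gen_step {R : realType} {s k : nat} (xi : 'I_s -> 'I_s -> R)
    (mu : 'I_s -> 'M[int]_k) (z z' : 'cV[R]_s * 'cV[R]_k) : Prop :=
  (exists i, z' = tau xi mu i z) \/
  (exists l : 'cV[int]_k, z' = (z.1, z.2 + intmx l)).

Definition G_orbit_rel {R : realType} {s k : nat} (xi : 'I_s -> 'I_s -> R)
    (mu : 'I_s -> 'M[int]_k) : 'cV[R]_s * 'cV[R]_k -> 'cV[R]_s * 'cV[R]_k -> Prop :=
  clos_refl_sym_trans _ (gen_step xi mu).

Definition unit_interval {R : realType} : set R := [set t | 0 <= t <= 1].

Definition fiber_bundle {B F Y : topologicalType} (p : Y -> B) : Prop :=
  continuous p /\ (forall b, exists y, p y = b) /\
  forall b : B, exists U : set B, [/\ open U, U b &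
    exists (h : Y -> F) (g : B * F -> Y),
      [/\ {within p @^-1` U, continuous h},
          {within U `*` [set: F], continuous g},
          (forall y, U (p y) -> g (p y, h y) = y) &
          (forall c f, U c -> p (g (c, f)) = c /\ h (g (c, f)) = f)]].

Definition fiber_identification {B F Y : topologicalType} (p : Y -> B) (b0 : B)
    (phi : F -> Y) (phiinv : Y -> F) : Prop :=
  [/\ continuous phi,
      {within p @^-1` [set b0], continuous phiinv},
      (forall z, p (phi z) = b0 /\ phiinv (phi z) = z) &
      (forall y, p y = b0 -> phi (phiinv y) = y)].

(* Convention: Phi lifts gamma with Phi(1,.) = phi; then the monodromy map is
   phiinv o Phi(0,.), required to be homotopic to L. *)
Definition has_monodromy {R : realType} {B F Y : topologicalType} (p : Y -> B)
    (gamma : R -> B) (phi : F -> Y) (phiinv : Y -> F) (L : F -> F) : Prop :=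
  exists Phi : R * F -> Y,
    [/\ {within unit_interval `*` [set: F], continuous Phi},
        (forall t z, unit_interval t -> p (Phi (t, z)) = gamma t),
        (forall z, Phi (1, z) = phi z) &
        exists H : R * F -> F,
          [/\ {within unit_interval `*` [set: F], continuous H},
              (forall z, H (0, z) = phiinv (Phi (0, z))) &
              (forall z, H (1, z) = L z)]].

Definition std_loop {R : realType} {s : nat} {T : topologicalType}
    (pis : 'cV[R]_s -> T) (i : 'I_s) (t : R) : T :=
  pis (t *: (delta_mx i 0 : 'cV[R]_s)).

(* Main.v *)
Set Warnings "-notation-overridden,-ambiguous-paths,-notation-incompatible-prefix".
Require Import Defs.
From HB Require Import structures.
From Stdlib Require Import Relation_Operators.
From mathcomp Require Import all_boot all_order all_algebra.
From mathcomp Require Import all_classical all_reals all_analysis.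
From mathcomp Require Import lra zify.
Import Order.TTheory GRing.Theory Num.Theory.
Import numFieldNormedType.Exports.
Local Open Scope classical_set_scope.
Local Open Scope ring_scope.
Definition pw {k} (M : 'M[int]_k) (z : int) : 'M[int]_k :=
  if (0 <= z) then M ^+ `|z|%N else (invmx M) ^+ `|z|%N.

Lemma mulmxV_r k (M : 'M[int]_k) : M \in unitmx -> M * invmx M = 1.
Proof. by move=> HM; rewrite -mulmxE mulmxV. Qed.

Lemma mulVmx_r k (M : 'M[int]_k) : M \in unitmx -> invmx M * M = 1.
Proof. by move=> HM; rewrite -mulmxE mulVmx. Qed.

Lemma pwS k (M : 'M[int]_k) z : M \in unitmx -> pw M (z + 1) = M * pw M z.
Proof.
move=> HM; case: z => m.
  have -> : Posz m + 1 = Posz m.+1 by rewrite -addn1 PoszD.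
  by rewrite /pw /= exprS.
case: m => [|m].
  have -> : Negz 0 + 1 = 0 by [].
  by rewrite /pw /= expr0 expr1 mulmxV_r.
have -> : Negz m.+1 + 1 = Negz m.
  by rewrite !NegzE -addn1 PoszD opprD addrK.
rewrite /pw /=.
by rewrite [invmx M ^+ m.+2]exprS mulrA mulmxV_r // mul1r.
Qed.

Lemma pw0 k (M : 'M[int]_k) : pw M 0 = 1.
Proof. by rewrite /pw /= expr0. Qed.

Lemma comm_inv k (A B : 'M[int]_k) : B \in unitmx -> GRing.comm A B ->
  GRing.comm A (invmx B).
Proof.
move=> HB hAB; rewrite /GRing.comm.
have : invmx B * (A * B) * invmx B = invmx B * (B * A) * invmx B by rewrite hAB.
by rewrite !mulrA mulVmx_r // mul1r -!mulrA mulmxV_r // mulr1 => <-.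
Qed.

Lemma comm_pw k (A B : 'M[int]_k) z : B \in unitmx -> GRing.comm A B ->
  GRing.comm A (pw B z).
Proof.
move=> HB hAB; rewrite /pw; case: ifP => _; apply: commrX => //.
exact: comm_inv.
Qed.

Definition Pm {s k} (mu : 'I_s -> 'M[int]_k) (n : 'cV[int]_s) : 'M[int]_k :=
  \prod_(i < s) pw (mu i) (n i 0).

Lemma prod_bump k (I : eqType) (r : seq I) (F G : I -> 'M[int]_k) a i :
  uniq r -> (forall j, j != i -> G j = F j) -> G i = a * F i ->
  (forall j, GRing.comm a (F j)) ->
  \prod_(j <- r) G j = if i \in r then a * \prod_(j <- r) F j else \prod_(j <- r) F j.
Proof.
move=> + HGF HGi Hc; elim: r => [|x r IH] /=; first by rewrite !big_nil.
move=> /andP [xr ur]; rewrite !big_cons in_cons IH //.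
case: (eqVneq i x) => [eix|ix] /=.
  by subst x; rewrite (negbTE xr) /= HGi mulrA.
rewrite HGF; last by rewrite eq_sym.
case: ifP => // _; rewrite !mulrA; congr (_ * _); exact: esym (Hc x).
Qed.

Lemma PmS s k (mu : 'I_s -> 'M[int]_k) (Hmu : forall i, mu i \in unitmx)
  (Hcomm : forall i j, mu i *m mu j = mu j *m mu i) n i :
  Pm mu (n + delta_mx i 0) = mu i * Pm mu n.
Proof.
rewrite /Pm.
rewrite (@prod_bump k _ _ (fun j => pw (mu j) (n j 0)) _ (mu i) i).
- by rewrite mem_index_enum.
- exact: index_enum_uniq.
- by move=> j ji; rewrite !mxE (negbTE ji) addr0.
- by rewrite !mxE !eqxx /= pwS.
- by move=> j; apply: comm_pw => //; rewrite /GRing.comm -!mulmxE.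
Qed.

Lemma Pm0 s k (mu : 'I_s -> 'M[int]_k) : Pm mu 0 = 1.
Proof. by rewrite /Pm big1 // => i _; rewrite mxE pw0. Qed.

Lemma comm_Pm s k (mu : 'I_s -> 'M[int]_k) (Hmu : forall i, mu i \in unitmx)
  (Hcomm : forall i j, mu i *m mu j = mu j *m mu i) n i :
  GRing.comm (mu i) (Pm mu n).
Proof.
apply: commr_prod => j _; apply: comm_pw => //.
by rewrite /GRing.comm -!mulmxE.
Qed.
Lemma intmxM (R : realType) m n p (A : 'M[int]_(m, n)) (B : 'M[int]_(n, p)) :
  @intmx R _ _ (A *m B) = intmx A *m intmx B.
Proof. by rewrite /intmx map_mxM. Qed.
Lemma intmxD (R : realType) m n (A B : 'M[int]_(m, n)) :
  @intmx R _ _ (A + B) = intmx A + intmx B.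
Proof. by rewrite /intmx map_mxD. Qed.
Lemma intmxN (R : realType) m n (A : 'M[int]_(m, n)) :
  @intmx R _ _ (- A) = - intmx A.
Proof. by rewrite /intmx map_mxN. Qed.
Lemma intmx0 (R : realType) m n : @intmx R m n 0 = 0.
Proof. by rewrite /intmx map_mx0. Qed.
Lemma intmx1 (R : realType) n : @intmx R n n 1%:M = 1%:M.
Proof. by rewrite /intmx map_mx1. Qed.
Lemma intmx_delta (R : realType) m n (i : 'I_m) (j : 'I_n) :
  @intmx R _ _ (delta_mx i j) = delta_mx i j.
Proof. by apply/matrixP => a b; rewrite !mxE; case: (_ && _). Qed.

Definition Mt {R : realType} {s} (xi : 'I_s -> 'I_s -> R) : 'M[R]_s :=
  (\matrix_(i < s, j < s) ln (xi i j))^T.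
Definition lnv {R : realType} {s} (x : 'cV[R]_s) : 'cV[R]_s := map_mx (@ln R) x.
Definition expv {R : realType} {s} (x : 'cV[R]_s) : 'cV[R]_s := map_mx (@expR R) x.
Definition cc {R : realType} {s} (xi : 'I_s -> 'I_s -> R) (x : 'cV[R]_s) : 'cV[R]_s :=
  invmx (Mt xi) *m lnv x.
Definition xexp {R : realType} {s} (xi : 'I_s -> 'I_s -> R) (c : 'cV[R]_s) : 'cV[R]_s :=
  expv (Mt xi *m c).

Lemma lnv_expv (R : realType) s (v : 'cV[R]_s) : lnv (expv v) = v.
Proof. by apply/matrixP => i j; rewrite !mxE expRK. Qed.

Lemma expv_lnv (R : realType) s (v : 'cV[R]_s) : (forall j, 0 < v j 0) -> expv (lnv v) = v.
Proof. by move=> Hv; apply/matrixP => i j; rewrite !mxE ord1 lnK // posrE. Qed.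

Lemma cc_xexp {R : realType} {s} {xi : 'I_s -> 'I_s -> R} (HM : Mt xi \in unitmx) c :
  cc xi (xexp xi c) = c.
Proof. by rewrite /cc /xexp lnv_expv mulmxA mulVmx // mul1mx. Qed.

Lemma xexp_cc {R : realType} {s} {xi : 'I_s -> 'I_s -> R} (HM : Mt xi \in unitmx) (x : 'cV[R]_s) :
  (forall j, 0 < x j 0) -> xexp xi (cc xi x) = x.
Proof. by move=> Hx; rewrite /cc /xexp mulmxA mulmxV // mul1mx expv_lnv. Qed.

Lemma xexp_pos (R : realType) s (xi : 'I_s -> 'I_s -> R) c j : 0 < xexp xi c j 0.
Proof. by rewrite /xexp /expv mxE expR_gt0. Qed.

Lemma tau_xexp (R : realType) s k (xi : 'I_s -> 'I_s -> R) (mu : 'I_s -> 'M[int]_k)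
  (Hxi : forall i j, 0 < xi i j) i c w :
  tau xi mu i (xexp xi c, w) = (xexp xi (c + delta_mx i 0), intmx (mu i) *m w).
Proof.
congr (_, _); apply/matrixP => j a; rewrite ord1 /xexp /expv mulmxDr -colE !mxE.
by rewrite expRD lnK ?posrE // mulrC.
Qed.

Lemma cc_tau (R : realType) s k (xi : 'I_s -> 'I_s -> R) (mu : 'I_s -> 'M[int]_k)
  (Hxi : forall i j, 0 < xi i j) (HM : Mt xi \in unitmx) i (x : 'cV[R]_s) (v : 'cV[R]_k) :
  (forall j, 0 < x j 0) ->
  cc xi (tau xi mu i (x, v)).1 = cc xi x + delta_mx i 0.
Proof.
move=> Hx; rewrite -{1}(xexp_cc HM _ Hx) tau_xexp //= cc_xexp //.
Qed.
Lemma intvec_step s (Q : 'cV[int]_s -> Prop)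
  (HS : forall n i, Q n -> Q (n + delta_mx i 0))
  (HP : forall n i, Q n -> Q (n - delta_mx i 0)) i (z : int) m :
  Q m -> Q (m + z *: delta_mx i 0).
Proof.
move=> Qm; case: z => k.
  elim: k => [|k IH]; first by rewrite scale0r addr0.
  have -> : Posz k.+1 = Posz k + 1 by rewrite -addn1 PoszD.
  by rewrite scalerDl scale1r addrA; apply: HS.
rewrite NegzE; elim: k => [|k IH]; first by rewrite scaleN1r; apply: HP.
have -> : Posz k.+2 = Posz k.+1 + 1 by rewrite -addn1 PoszD.
by rewrite opprD scalerDl scaleN1r addrA; apply: HP.
Qed.

Lemma intvec_ind s (Q : 'cV[int]_s -> Prop) : Q 0 ->
  (forall n i, Q n -> Q (n + delta_mx i 0)) ->
  (forall n i, Q n -> Q (n - delta_mx i 0)) -> forall n, Q n.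
Proof.
move=> Q0 HS HP n; rewrite [n]matrix_sum_delta.
elim: (index_enum _) => [|a r IH]; first by rewrite big_nil.
rewrite big_cons big_ord1 addrC; exact: intvec_step.
Qed.

Lemma PD (R : realType) s k (xi : 'I_s -> 'I_s -> R) (mu : 'I_s -> 'M[int]_k)
  (Hxi : forall i j, 0 < xi i j) (Hmu : forall i, mu i \in unitmx)
  (Hcomm : forall i j, mu i *m mu j = mu j *m mu i) (n : 'cV[int]_s) c w :
  G_orbit_rel xi mu (xexp xi c, w) (xexp xi (c + intmx n), intmx (Pm mu n) *m w).
Proof.
elim/intvec_ind: n c w => [|n i IH|n i IH] c w.
- rewrite intmx0 addr0 Pm0 intmx1 mul1mx; exact: rst_refl.
- apply: rst_trans (IH c w) _; apply: rst_step; left; exists i.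
  by rewrite tau_xexp // intmxD intmx_delta addrA PmS // -mulmxE intmxM mulmxA.
- apply: rst_trans (IH c w) _; apply: rst_sym; apply: rst_step; left; exists i.
  move: (n - delta_mx i 0) (subrK (delta_mx i 0) n) => m <-.
  by rewrite tau_xexp // intmxD intmx_delta addrA PmS // -mulmxE intmxM mulmxA.
Qed.

Lemma step_pos (R : realType) s k (xi : 'I_s -> 'I_s -> R) (mu : 'I_s -> 'M[int]_k)
  (Hxi : forall i j, 0 < xi i j) z z' :
  gen_step xi mu z z' -> (@pos_part R s k z <-> @pos_part R s k z').
Proof.
case=> [[i ->]|[l ->]] //=; rewrite /pos_part /=.
by split=> H j; have := H j; rewrite mxE pmulr_rgt0.
Qed.

Lemma orbit_inv (R : realType) s k (xi : 'I_s -> 'I_s -> R) (mu : 'I_s -> 'M[int]_k)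
  (Hxi : forall i j, 0 < xi i j) (Z : Type) (Phi : 'cV[R]_s * 'cV[R]_k -> Z) :
  (forall z z', @pos_part R s k z -> gen_step xi mu z z' -> Phi z' = Phi z) ->
  forall z z', G_orbit_rel xi mu z z' ->
    (@pos_part R s k z <-> @pos_part R s k z') /\ (@pos_part R s k z -> Phi z' = Phi z).
Proof.
move=> HPhi z z'; elim => {z z'}.
- move=> z z' st; split; first exact: step_pos st.
  by move=> pz; apply: HPhi.
- by move=> z; split.
- move=> z z' _ [e1 e2]; split; first by split; apply e1.
  by move=> pz'; rewrite e2 //; apply e1.
- move=> z1 z2 z3 _ [e1 f1] _ [e2 f2]; split.
    by split=> h; [apply/e2/e1|apply/e1/e2].
  by move=> p1; rewrite f2 ?f1 //; apply e1.
Qed.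
Lemma openP' (T : topologicalType) (A : set T) : (forall x, A x -> nbhs x A) -> open A.
Proof. by move=> H; rewrite openE => x Ax; apply: H. Qed.

Lemma mx_cvg (R : realType) (T : Type) (F : set_system T) (FF : Filter F) m n
  (f : T -> 'M[R]_(m, n)) (M : 'M[R]_(m, n)) :
  (forall i j, (fun t => f t i j) @ F --> M i j) -> f @ F --> M.
Proof.
move=> H A [P HP sPA]; apply: (filterS (fun t Ht => sPA (f t) Ht)).
apply: filter_forall => i; apply: filter_forall => j.
exact: (H i j (P i j) (HP i j)).
Qed.

Lemma cvg_sum_fun (R : realType) (T : Type) (F : set_system T) (FF : Filter F)
  (I : Type) (r : seq I) (g : I -> T -> R) (a : I -> R) :
  (forall l, g l @ F --> a l) ->
  (fun t => \sum_(l <- r) g l t) @ F --> \sum_(l <- r) a l.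
Proof.
move=> H; elim: r => [|x r IH].
  rewrite big_nil; under eq_fun do rewrite big_nil; exact: cvg_cst.
rewrite big_cons; under eq_fun do rewrite big_cons.
exact: (cvgD (H x) IH).
Qed.

Lemma cont_mulmx (R : realType) m n p (A : 'M[R]_(m, n)) :
  continuous (fun v : 'M[R]_(n, p) => A *m v).
Proof.
move=> v; apply: (@mx_cvg R _ _ (nbhs_filter v)) => i j.
have -> : (fun t : 'M[R]_(n, p) => (A *m t) i j) =
  (fun t => \sum_(l < n) A i l * t l j) by apply: funext => t; rewrite mxE.
rewrite mxE; apply: (@cvg_sum_fun R _ (nbhs v) (nbhs_filter v)) => l; apply: cvgM; first exact: cvg_cst.
exact: coord_continuous.
Qed.

Lemma cont_lnv (R : realType) s (x : 'cV[R]_s) : (forall j, 0 < x j 0) ->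
  {for x, continuous (@lnv R s)}.
Proof.
move=> Hx; apply: (@mx_cvg R _ _ (nbhs_filter x)) => i j.
have -> : (fun t : 'cV[R]_s => lnv t i j) = (@ln R) \o (fun t => t i j).
  by apply: funext => t; rewrite /lnv mxE.
rewrite /lnv mxE; apply: continuous_comp; first exact: coord_continuous.
by apply: continuous_ln; rewrite ord1.
Qed.

Lemma cont_expv (R : realType) s : continuous (@expv R s).
Proof.
move=> x; apply: (@mx_cvg R _ _ (nbhs_filter x)) => i j.
have -> : (fun t : 'cV[R]_s => expv t i j) = (@expR R) \o (fun t => t i j).
  by apply: funext => t; rewrite /expv mxE.
rewrite /expv mxE; apply: continuous_comp; first exact: coord_continuous.
exact: continuous_expR.
Qed.

Lemma cont_cc (R : realType) s (xi : 'I_s -> 'I_s -> R) (x : 'cV[R]_s) :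
  (forall j, 0 < x j 0) -> {for x, continuous (cc xi)}.
Proof.
move=> Hx; apply: (@continuous_comp _ _ _ (@lnv R s) (fun v => invmx (Mt xi) *m v)).
  exact: cont_lnv.
exact: cont_mulmx.
Qed.

Lemma cont_xexp (R : realType) s (xi : 'I_s -> 'I_s -> R) : continuous (xexp xi).
Proof.
move=> x; apply: (@continuous_comp _ _ _ (fun v => Mt xi *m v) (@expv R s)).
  exact: cont_mulmx.
exact: cont_expv.
Qed.

Lemma cont_fst (T U : topologicalType) : continuous (@fst T U).
Proof. by move=> z; apply: cvg_fst. Qed.

Lemma cont_snd (T U : topologicalType) : continuous (@snd T U).
Proof. by move=> z; apply: cvg_snd. Qed.

Lemma pos_open (R : realType) s k : open (@pos_part R s k).
Proof.
apply: openP' => z Dz; rewrite /pos_part.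
apply: (@filter_forall _ _ (fun j (z0 : 'cV[R]_s * 'cV[R]_k) => 0 < z0.1 j 0) _ (nbhs_filter z)) => j.
have c : {for z, continuous (fun z : 'cV[R]_s * 'cV[R]_k => z.1 j 0)}.
  apply: (@continuous_comp _ _ _ fst (fun v : 'cV[R]_s => v j 0)).
    exact: cont_fst.
  exact: coord_continuous.
exact: (c [set x : R | 0 < x] (@open_gt R 0 _ (Dz j))).
Qed.

Lemma pi_lat {R : realType} {n} {T : topologicalType} {pr : 'cV[R]_n -> T}
  (Hpr : is_quotient_map [set: 'cV[R]_n] (@lattice_rel R n) pr) x l :
  pr (x + intmx l) = pr x.
Proof. by case: Hpr => _ H2 _; symmetry; apply/H2 => //; exists l. Qed.

Lemma pi_eq {R : realType} {n} {T : topologicalType} {pr : 'cV[R]_n -> T}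
  (Hpr : is_quotient_map [set: 'cV[R]_n] (@lattice_rel R n) pr) x y :
  pr x = pr y -> exists l, y = x + intmx l.
Proof. by case: Hpr => _ H2 _ /H2; apply. Qed.

Lemma pi_cont {R : realType} {n} {T : topologicalType} {pr : 'cV[R]_n -> T}
  (Hpr : is_quotient_map [set: 'cV[R]_n] (@lattice_rel R n) pr) : continuous pr.
Proof.
case: Hpr => _ _ H3; apply/continuousP => A oA.
have [V [oV eV]] := (H3 A).1 oA.
by move: eV; rewrite !setTI => ->.
Qed.

Lemma cont_transl (R : realType) n (c : 'cV[R]_n) : continuous (fun x : 'cV[R]_n => x + c).
Proof.
move=> x.
have := @cvgD _ _ _ (nbhs x) (nbhs_filter x) (fun y => y) (fun _ => c) x c cvg_id (cvg_cst c).
exact.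
Qed.

Lemma pi_open {R : realType} {n} {T : topologicalType} {pr : 'cV[R]_n -> T}
  (Hpr : is_quotient_map [set: 'cV[R]_n] (@lattice_rel R n) pr) (A : set 'cV[R]_n) :
  open A -> open (pr @` A).
Proof.
move=> oA; have Hpr' := Hpr; case: Hpr' => _ _ H3; apply/H3.
exists (\bigcup_(l in [set: 'cV[int]_n]) ((fun x => x + intmx l) @^-1` A)).
split.
  apply: bigcup_open => l _; apply: open_comp => //.
  by move=> x _; apply: cont_transl.
rewrite !setTI; apply/seteqP; split => x /=.
  move=> [a Aa /(pi_eq Hpr) [l ->]]; exists (- l) => //=.
  by rewrite intmxN addrK.
by move=> [l _ /= Al]; exists (x + intmx l) => //; rewrite (pi_lat Hpr).
Qed.

Lemma descent1 {R : realType} {n} {T Z : topologicalType} {pr : 'cV[R]_n -> T}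
  (Hpr : is_quotient_map [set: 'cV[R]_n] (@lattice_rel R n) pr)
  (rep : T -> 'cV[R]_n) (Hrep : forall t, pr (rep t) = t) (F : 'cV[R]_n -> Z) :
  continuous F -> (forall x l, F (x + intmx l) = F x) -> continuous (F \o rep).
Proof.
move=> cF iF; apply/continuousP => O oO.
have -> : (F \o rep) @^-1` O = pr @` (F @^-1` O).
  apply/seteqP; split => t /=.
    by move=> Ht; exists (rep t).
  move=> [a Fa <-]; have [l ->] := pi_eq Hpr _ _ (esym (Hrep (pr a))).
  by rewrite iF.
apply: (pi_open Hpr); exact: (proj1 (continuousP _) cF).
Qed.

Lemma idpi_open {R : realType} {n} {T T1 : topologicalType} {pr : 'cV[R]_n -> T}
  (Hpr : is_quotient_map [set: 'cV[R]_n] (@lattice_rel R n) pr)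
  (V : set (T1 * 'cV[R]_n)) :
  open V -> open ((fun z => (z.1, pr z.2)) @` V).
Proof.
move=> oV; apply: openP' => _ [[t w] Vtw <-] /=.
have : nbhs (t, w) V by move: oV; rewrite openE => /(_ _ Vtw).
move=> [[A B] /= [nA nB] sAB].
have oB : open (pr @` B°) by apply: (pi_open Hpr); exact: open_interior.
have nB' : nbhs (pr w) (pr @` B°).
  by move: oB; rewrite openE; apply; exists w.
exists (A, pr @` B°) => //= -[a f] /= [Aa [b Bb <-]].
exists (a, b) => //; apply: sAB; split => //=.
exact: interior_subset.
Qed.

Lemma descent2 {R : realType} {n} {T T1 Z : topologicalType} {pr : 'cV[R]_n -> T}
  (Hpr : is_quotient_map [set: 'cV[R]_n] (@lattice_rel R n) pr)
  (rep : T -> 'cV[R]_n) (Hrep : forall t, pr (rep t) = t)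
  (S : set T1) (G : T1 * 'cV[R]_n -> Z) :
  {within S `*` setT, continuous G} ->
  (forall t x l, G (t, x + intmx l) = G (t, x)) ->
  {within S `*` setT, continuous (fun z : T1 * T => G (z.1, rep z.2))}.
Proof.
move=> cG iG; apply/continuousP => O oO.
have := (proj1 (continuousP _) cG) O oO.
move=> /open_subspaceP [V oV eV]; apply/open_subspaceP.
exists ((fun z => (z.1, pr z.2)) @` V); first exact: (idpi_open Hpr).
apply/seteqP; split => -[t f] /= [H [St _]]; split => //.
  move: H => [[t' w] Vtw [e1 e2]]; subst t' f.
  have : (V `&` S `*` setT) (t, w) by split.
  rewrite eV => -[/= Gin _].
  rewrite /from_subspace /=.
  have [l ->] := pi_eq Hpr _ _ (esym (Hrep (pr w))).
  by rewrite iG.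
have : ((from_subspace (S `*` setT) G) @^-1` O `&` S `*` setT) (t, rep f) by [].
rewrite -eV => -[Vt _]; exists (t, rep f) => //=.
by rewrite Hrep.
Qed.

Definition HC {R : realType} {s} (c0 c : 'cV[R]_s) :=
  forall j, c0 j 0 - 2^-1 <= c j 0 < c0 j 0 + 2^-1.
Definition Wc {R : realType} {s} (c0 c : 'cV[R]_s) :=
  forall j, c0 j 0 - 2^-1 < c j 0 < c0 j 0 + 2^-1.
Definition rnd {R : realType} {s} (c0 c : 'cV[R]_s) : 'cV[int]_s :=
  \col_j Num.floor (c j 0 - c0 j 0 + 2^-1).

Lemma Wc_HC (R : realType) s (c0 c : 'cV[R]_s) : Wc c0 c -> HC c0 c.
Proof. by move=> H j; have /andP [h1 h2] := H j; rewrite h2 ltW. Qed.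

Lemma Wc_c0 (R : realType) s (c0 : 'cV[R]_s) : Wc c0 c0.
Proof.
move=> j; have h : (0 : R) < 2^-1 by rewrite invr_gt0 ltr0n.
apply/andP; split; lra.
Qed.

Lemma int_small (R : realType) (z : int) : (z%:~R : R) < 1 -> -1 < (z%:~R : R) -> z = 0.
Proof.
have -> : (1 : R) = (1 : int)%:~R by [].
have -> : (-1 : R) = (-1 : int)%:~R by rewrite mulrNz.
rewrite !ltr_int => h1 h2; lia.
Qed.

Lemma HC_uniq {R : realType} {s} (c0 x : 'cV[R]_s) (l : 'cV[int]_s) :
  HC c0 x -> HC c0 (x + intmx l) -> l = 0.
Proof.
move=> h1 h2; apply/matrixP => j a; rewrite ord1 mxE.
have := h1 j; have := h2 j; rewrite !mxE => /andP [a1 a2] /andP [b1 b2].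
apply: (@int_small R); lra.
Qed.

Lemma rnd_HC (R : realType) s (c0 c : 'cV[R]_s) : HC c0 (c - intmx (rnd c0 c)).
Proof.
move=> j; rewrite !mxE.
have /andP [h1 h2] := floor_itv (c j 0 - c0 j 0 + 2^-1).
rewrite intrD in h2; apply/andP; split; lra.
Qed.

Lemma rnd_eq (R : realType) s (c0 c : 'cV[R]_s) (l : 'cV[int]_s) :
  HC c0 (c - intmx l) -> rnd c0 c = l.
Proof.
move=> H; apply/matrixP => j a; rewrite ord1 mxE; apply: floor_def.
have := H j; rewrite !mxE intrD => /andP [h1 h2]; apply/andP; split; lra.
Qed.

Lemma rnd_shift (R : realType) s (c0 c : 'cV[R]_s) (l : 'cV[int]_s) :
  rnd c0 (c + intmx l) = rnd c0 c + l.
Proof.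
apply: rnd_eq; rewrite intmxD opprD addrACA subrr addr0; exact: rnd_HC.
Qed.

Lemma HC_pi_uniq {R : realType} {s} {T : topologicalType} {pr : 'cV[R]_s -> T}
  (Hpr : is_quotient_map [set: 'cV[R]_s] (@lattice_rel R s) pr) (c0 x y : 'cV[R]_s) :
  HC c0 x -> HC c0 y -> pr x = pr y -> x = y.
Proof.
move=> hx hy /(pi_eq Hpr) [l el]; subst y.
by rewrite (HC_uniq _ _ _ hx hy) intmx0 addr0.
Qed.

Lemma Wc_open (R : realType) s (c0 : 'cV[R]_s) : open (Wc c0).
Proof.
apply: openP' => c Hc; rewrite /Wc.
apply: (@filter_forall _ _ (fun j (c1 : 'cV[R]_s) => c0 j 0 - 2^-1 < c1 j 0 < c0 j 0 + 2^-1) _ (nbhs_filter c)) => j.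
have /andP [h1 h2] := Hc j.
have o : open [set x : R | c0 j 0 - 2^-1 < x < c0 j 0 + 2^-1].
  have -> : [set x : R | c0 j 0 - 2^-1 < x < c0 j 0 + 2^-1] =
    [set x | c0 j 0 - 2^-1 < x] `&` [set x | x < c0 j 0 + 2^-1].
    by apply/seteqP; split => x /= => [/andP [] | []] -> ->.
  exact: openI (@open_gt R _) (@open_lt R _).
have := @coord_continuous R s 1 j 0 c.
move=> /(_ [set x : R | c0 j 0 - 2^-1 < x < c0 j 0 + 2^-1]); apply.
by move: o; rewrite openE; apply; rewrite /= h1 h2.
Qed.

Definition cW {R : realType} {s} {T : Type} (rep : T -> 'cV[R]_s) (c0 : 'cV[R]_s) (b : T) :=
  rep b - intmx (rnd c0 (rep b)).

Lemma cW_HC {R : realType} {s} {T : Type} (rep : T -> 'cV[R]_s) c0 b : HC c0 (cW rep c0 b).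
Proof. exact: rnd_HC. Qed.

Lemma cW_pi {R : realType} {s} {T : topologicalType} {pr : 'cV[R]_s -> T}
  (Hpr : is_quotient_map [set: 'cV[R]_s] (@lattice_rel R s) pr)
  {rep : T -> 'cV[R]_s} (Hrep : forall t, pr (rep t) = t) c0 b :
  pr (cW rep c0 b) = b.
Proof. by rewrite /cW -intmxN (pi_lat Hpr) Hrep. Qed.

Lemma cW_eq {R : realType} {s} {T : topologicalType} {pr : 'cV[R]_s -> T}
  (Hpr : is_quotient_map [set: 'cV[R]_s] (@lattice_rel R s) pr)
  {rep : T -> 'cV[R]_s} (Hrep : forall t, pr (rep t) = t) c0 c :
  HC c0 c -> cW rep c0 (pr c) = c.
Proof.
move=> Hc; apply: (HC_pi_uniq Hpr _ _ _ (cW_HC _ _ _) Hc).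
exact: (cW_pi Hpr).
Qed.

Lemma cW_cont {R : realType} {s} {T : topologicalType} {pr : 'cV[R]_s -> T}
  (Hpr : is_quotient_map [set: 'cV[R]_s] (@lattice_rel R s) pr)
  {rep : T -> 'cV[R]_s} (Hrep : forall t, pr (rep t) = t) c0 :
  {within pr @` Wc c0, continuous (cW rep c0)}.
Proof.
apply/continuousP => O oO; apply/open_subspaceP.
exists (pr @` (O `&` Wc c0)).
  by apply: (pi_open Hpr); exact: openI oO (Wc_open _ _ c0).
apply/seteqP; split => b /= [H Ub]; split => //.
  move: H => [c [Oc Wcc] <-]; rewrite /from_subspace /=.
  by rewrite (cW_eq Hpr Hrep _ _ (Wc_HC _ _ _ _ Wcc)).
move: Ub => [c Wcc ecb]; exists c => //; split => //.
move: H; rewrite /from_subspace /= -ecb.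
by rewrite (cW_eq Hpr Hrep _ _ (Wc_HC _ _ _ _ Wcc)).
Qed.

Lemma q_cont {X Y : topologicalType} {D : set X} {rel : X -> X -> Prop} {q : X -> Y}
  (Hq : is_quotient_map D rel q) (oD : open D) z : D z -> {for z, continuous q}.
Proof.
move=> Dz A; rewrite nbhsE => -[B [oB Bqz] BA].
case: Hq => _ _ H3; have [V [oV eV]] := (H3 B).1 oB.
have DVz : (D `&` V) z by rewrite -eV.
have oDV : open (D `&` V) by apply: openI.
move: oDV; rewrite openE => /(_ z DVz) nDV.
apply: filterS nDV => x DVx; apply: BA.
by move: DVx; rewrite -eV => -[].
Qed.

Lemma desc_cont {X Y Z : topologicalType} {D : set X} {rel : X -> X -> Prop} {q : X -> Y}
  (Hq : is_quotient_map D rel q) (oD : open D) (A : set Y) (F : Y -> Z) :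
  open A -> (forall z, D z -> A (q z) -> {for z, continuous (F \o q)}) ->
  {within A, continuous F}.
Proof.
move=> oA HF; rewrite continuous_open_subspace //; apply/continuous_inP => // O oO.
have Hq' := Hq; case: Hq' => _ _ H3; apply/H3.
have [V0 [oV0 eV0]] := (H3 A).1 oA.
have oB : open (D `&` q @^-1` A) by rewrite eV0; apply: openI.
have : {in D `&` q @^-1` A, continuous (F \o q)}.
  by move=> z /set_mem [Dz Az]; apply: HF.
move=> /(continuous_inP _ oB) /(_ O oO) oBO.
exists (D `&` q @^-1` A `&` (F \o q) @^-1` O); split => //.
by apply/seteqP; split => x /= [Dx [Ax Ox]] //; do ! split => //; case: Ax.
Qed.

Lemma qdesc (R : realType) s k (xi : 'I_s -> 'I_s -> R) (mu : 'I_s -> 'M[int]_k)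
  (Hxi : forall i j, 0 < xi i j) (Y : topologicalType) (q : 'cV[R]_s * 'cV[R]_k -> Y)
  (Hq : is_quotient_map (@pos_part R s k) (G_orbit_rel xi mu) q)
  (repq : Y -> 'cV[R]_s * 'cV[R]_k)
  (Hrq : forall y, @pos_part R s k (repq y) /\ q (repq y) = y)
  (Z : Type) (Phi : 'cV[R]_s * 'cV[R]_k -> Z)
  (HPhi : forall z z', @pos_part R s k z -> gen_step xi mu z z' -> Phi z' = Phi z) z :
  @pos_part R s k z -> Phi (repq (q z)) = Phi z.
Proof.
move=> Dz; have [Dr Er] := Hrq (q z); case: Hq => _ H2 _.
have rl := (H2 _ _ Dr Dz).1 Er.
by have [_ h] := @orbit_inv R s k xi mu Hxi Z Phi HPhi _ _ rl; rewrite (h Dr).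
Qed.

Lemma cont_near {T U : topologicalType} (f g : T -> U) x (N : set T) :
  nbhs x N -> (forall y, N y -> f y = g y) -> {for x, continuous g} ->
  {for x, continuous f}.
Proof.
move=> nN e cg; have ex : f x = g x := e x (nbhs_singleton nN).
rewrite /prop_for /continuous_at ex; apply: cvg_trans cg.
apply: near_eq_cvg; apply: filterS nN => y Ny; exact: esym (e y Ny).
Qed.

Lemma cont_pair_within {T1 T2 Z : topologicalType} (S : set T1) (a : T1 -> Z) :
  {within S, continuous a} ->
  {within S `*` setT, continuous (fun z : T1 * T2 => (a z.1, z.2))}.
Proof.
move=> ca; apply/continuous_subspace_prodP => x Sx.
have cf : {for x, continuous (fst : subspace S * subspace (@setT T2) -> subspace S)}.
  exact: cvg_fst.
have cs : {for x, continuous (snd : subspace S * subspace (@setT T2) -> subspace (@setT T2))}.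
  exact: cvg_snd.
have c1 := @continuous_comp (subspace S * subspace (@setT T2))%type (subspace S) Z fst (a : subspace S -> Z) x cf (ca x.1).
have c2 : {for x, continuous (fun z : subspace S * subspace (@setT T2) => (z.2 : T2))}.
  move=> A nA; apply: cs; by rewrite /= nbhs_subspaceT.
exact: (cvg_pair c1 c2).
Qed.

Lemma cont_scal (R : realType) m n (v : 'M[R]_(m, n)) : continuous (fun t : R => t *: v).
Proof.
move=> t; apply: (@mx_cvg R _ _ (nbhs_filter t)) => i j.
have -> : (fun t0 : R => (t0 *: v) i j) = (fun t0 => t0 * v i j).
  by apply: funext => t0; rewrite mxE.
rewrite mxE; apply: cvgM; [exact: cvg_id | exact: cvg_cst].
Qed.

Theorem proposition2p5 (R : realType) (s k : nat)
    (xi : 'I_s -> 'I_s -> R) (mu : 'I_s -> 'M[int]_k)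
    (Hxi : forall i j, 0 < xi i j)
    (Hmu : forall i, mu i \in unitmx)
    (Hcomm : forall i j, mu i *m mu j = mu j *m mu i)
    (Hnondeg : (\matrix_(i < s, j < s) ln (xi i j)) \in unitmx)
    (Y : topologicalType) (q : 'cV[R]_s * 'cV[R]_k -> Y)
    (Hq : is_quotient_map (@pos_part R s k) (G_orbit_rel xi mu) q)
    (Ts : topologicalType) (pis : 'cV[R]_s -> Ts)
    (Hpis : is_quotient_map [set: 'cV[R]_s] (@lattice_rel R s) pis)
    (Tk : topologicalType) (pik : 'cV[R]_k -> Tk)
    (Hpik : is_quotient_map [set: 'cV[R]_k] (@lattice_rel R k) pik) :
  exists p : Y -> Ts,
    (@fiber_bundle Ts Tk Y p /\
     exists (phi : Tk -> Y) (phiinv : Y -> Tk),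
       fiber_identification p (pis 0) phi phiinv /\
       forall i : 'I_s, exists L : Tk -> Tk,
         (forall v : 'cV[R]_k, L (pik v) = pik (intmx (mu i) *m v)) /\
         has_monodromy p (std_loop pis i) phi phiinv L) /\
    (exists sigma : Ts -> Y, continuous sigma /\ forall b, p (sigma b) = b).
Proof.
have HM : Mt xi \in unitmx by rewrite /Mt unitmx_tr.
have oD : open (@pos_part R s k) := pos_open R s k.
have Hq' := Hq; case: Hq' => Hq1 Hq2 Hq3.
have Hpis' := Hpis; case: Hpis' => Hs1 _ _.
have Hpik' := Hpik; case: Hpik' => Hk1 _ _.
case: (choice Hq1) => repq Hrq.
case: (choice Hs1) => reps Hrs0.
have Hrs : forall t, pis (reps t) = t by move=> t; case: (Hrs0 t).
case: (choice Hk1) => repk Hrk0.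
have Hrk : forall t, pik (repk t) = t by move=> t; case: (Hrk0 t).
have xpos : forall c w, @pos_part R s k (xexp xi c, w).
  by move=> c w j; apply: xexp_pos.
have qlat : forall x w l, q (xexp xi x, w + intmx l) = q (xexp xi x, w).
  move=> x w l; apply/Hq2 => //; apply: rst_step; right; by exists (- l); rewrite /= intmxN addrK.
have qPD : forall n c w, q (xexp xi c, w) = q (xexp xi (c + intmx n), intmx (Pm mu n) *m w).
  by move=> n c w; apply/Hq2 => //; apply: PD.
have qtau : forall i w, q (xexp xi (delta_mx i 0), intmx (mu i) *m w) = q (xexp xi 0, w).
  move=> i w; apply/Hq2 => //; apply: rst_sym; apply: rst_step; left; exists i.
  by rewrite tau_xexp // add0r.
pose Phip (z : 'cV[R]_s * 'cV[R]_k) := pis (cc xi z.1).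
have HPhip : forall z z', @pos_part R s k z -> gen_step xi mu z z' -> Phip z' = Phip z.
  move=> [x v] z' Dz [[i ->]|[l ->]] //.
  by rewrite /Phip cc_tau // -(@intmx_delta R s 1 i 0) (pi_lat Hpis).
pose p (y : Y) := Phip (repq y).
have pq : forall z, @pos_part R s k z -> p (q z) = pis (cc xi z.1).
  by move=> z Dz; rewrite /p (@qdesc R s k xi mu Hxi Y q Hq repq Hrq _ _ HPhip z Dz).
pose Phih (c0 : 'cV[R]_s) (z : 'cV[R]_s * 'cV[R]_k) :=
  pik (intmx (Pm mu (- rnd c0 (cc xi z.1))) *m z.2).
have HPhih : forall c0 z z', @pos_part R s k z -> gen_step xi mu z z' ->
    Phih c0 z' = Phih c0 z.
  move=> c0 [x v] z' Dz [[i ->]|[l ->]].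
    rewrite /Phih cc_tau // -(@intmx_delta R s 1 i 0) rnd_shift /=.
    set r := rnd c0 (cc xi x).
    rewrite mulmxA -intmxM; congr (pik (intmx _ *m v)).
    rewrite mulmxE -(@comm_Pm s k mu Hmu Hcomm _ i) -(@PmS s k mu Hmu Hcomm).
    by rewrite opprD subrK.
  by rewrite /Phih /= mulmxDr -intmxM (pi_lat Hpik).
pose h (c0 : 'cV[R]_s) (y : Y) := Phih c0 (repq y).
have hq : forall c0 z, @pos_part R s k z -> h c0 (q z) = Phih c0 z.
  by move=> c0 z Dz; rewrite /h (@qdesc R s k xi mu Hxi Y q Hq repq Hrq _ _ (HPhih c0) z Dz).
pose g (c0 : 'cV[R]_s) (bf : Ts * Tk) := q (xexp xi (cW reps c0 bf.1), repk bf.2).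
have P3 : forall c0 y, g c0 (p y, h c0 y) = y.
  move=> c0 y; have [Dz qz] := Hrq y.
  rewrite /g /p /h /Phip /Phih /=.
  move: Dz qz; case: (repq y) => x v /= Dz qz.
  set r := rnd c0 (cc xi x).
  have e1 : pis (cc xi x) = pis (cc xi x - intmx r) by rewrite -intmxN (pi_lat Hpis).
  rewrite e1 (cW_eq Hpis Hrs _ _ (rnd_HC _ _ _ _)).
  have [l ->] := pi_eq Hpik _ _ (esym (Hrk (pik (intmx (Pm mu (- r)) *m v)))).
  rewrite qlat -intmxN -qPD xexp_cc //.
have rnd0 : forall c0 c : 'cV[R]_s, HC c0 c -> rnd c0 c = 0.
  by move=> c0 c Hc; apply: rnd_eq; rewrite intmx0 subr0.
have P4 : forall c0 b f, p (g c0 (b, f)) = b /\ h c0 (g c0 (b, f)) = f.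
  move=> c0 b f; rewrite /g /= pq // hq // /Phih /= cc_xexp //.
  rewrite (cW_pi Hpis Hrs); split => //.
  by rewrite rnd0 ?oppr0 ?Pm0 ?intmx1 ?mul1mx ?Hrk //; apply: cW_HC.
have cp : continuous p.
  apply/continuous_subspace_setT; apply: (desc_cont Hq oD setT p openT) => z Dz _.
  have nD : nbhs z (@pos_part R s k) by move: oD; rewrite openE; apply.
  apply: (@cont_near _ _ (p \o q) (fun z0 : 'cV[R]_s * 'cV[R]_k => pis (cc xi z0.1)) z _ nD (fun y Dy => pq y Dy)).
  apply: (@continuous_comp _ _ _ (fun z0 : 'cV[R]_s * 'cV[R]_k => cc xi z0.1) pis).
    apply: (@continuous_comp _ _ _ fst (cc xi)); first exact: cont_fst.
    exact: cont_cc.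
  exact: (pi_cont Hpis _).
have oU : forall c0 : 'cV[R]_s, open (pis @` Wc c0).
  by move=> c0; apply: (pi_open Hpis); apply: Wc_open.
have ch : forall c0 : 'cV[R]_s, {within p @^-1` (pis @` Wc c0), continuous (h c0)}.
  move=> c0; apply: (desc_cont Hq oD).
    exact: (proj1 (continuousP _) cp _ (oU c0)).
  move=> z Dz [c Wcc ec]; rewrite pq // in ec.
  have [l el] := pi_eq Hpis _ _ ec.
  have Wz : Wc c0 (cc xi z.1 - intmx l) by rewrite el addrK.
  pose N := @pos_part R s k `&` [set z' | Wc c0 (cc xi z'.1 - intmx l)].
  have nN : nbhs z N.
    apply: filterI; first by move: oD; rewrite openE; apply.
    have cz : {for z, continuous (fun z' : 'cV[R]_s * 'cV[R]_k => cc xi z'.1 - intmx l)}.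
      apply: (@continuous_comp _ _ _ (fun z0 : 'cV[R]_s * 'cV[R]_k => cc xi z0.1)
        (fun c1 => c1 - intmx l)).
        apply: (@continuous_comp _ _ _ fst (cc xi)); first exact: cont_fst.
        exact: cont_cc.
      exact: cont_transl.
    apply: cz; move: (Wc_open _ _ c0); rewrite openE; apply; exact: Wz.
  apply: (@cont_near _ _ (h c0 \o q)
    (fun z0 : 'cV[R]_s * 'cV[R]_k => pik (intmx (Pm mu (- l)) *m z0.2)) z N nN).
    move=> y [Dy Wy] /=; rewrite hq // /Phih.
    by rewrite (rnd_eq _ _ _ _ _ (Wc_HC _ _ _ _ Wy)).
  apply: (@continuous_comp _ _ _ (fun z0 : 'cV[R]_s * 'cV[R]_k => intmx (Pm mu (- l)) *m z0.2) pik).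
    apply: (@continuous_comp _ _ _ snd (fun w => intmx (Pm mu (- l)) *m w)).
      exact: cont_snd.
    exact: cont_mulmx.
  exact: (pi_cont Hpik _).
have cg : forall c0 : 'cV[R]_s, {within (pis @` Wc c0) `*` setT, continuous (g c0)}.
  move=> c0.
  have := @descent2 R k Tk Ts Y pik Hpik repk Hrk (pis @` Wc c0)
    (fun bw => q (xexp xi (cW reps c0 bw.1), bw.2)).
  apply.
    apply: (@within_continuous_comp _ _ _ _
      (fun bw : Ts * 'cV[R]_k => ((xexp xi \o cW reps c0) bw.1, bw.2)) q).
      by move=> _ /set_mem [bw _ <-]; apply: (q_cont Hq oD); apply: xpos.
    apply: cont_pair_within.
    apply: (@within_continuous_comp _ _ _ _ (cW reps c0) (xexp xi)).
      by move=> x _; apply: cont_xexp.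
    exact: (cW_cont Hpis Hrs).
  by move=> t x l; rewrite qlat.
have HC00 : HC (0 : 'cV[R]_s) 0 by apply: Wc_HC; apply: Wc_c0.
have cW0 : cW reps 0 (pis 0) = 0 by apply: (cW_eq Hpis Hrs).
pose phi (z : Tk) := q (xexp xi 0, repk z).
have phig : forall z, phi z = g 0 (pis 0, z) by move=> z; rewrite /g /= cW0.
have cqpair : forall (T : topologicalType) (a : T -> 'cV[R]_s) (b : T -> 'cV[R]_k),
    continuous a -> continuous b -> continuous (fun t => q (xexp xi (a t), b t)).
  move=> T a b ca cb t.
  apply: (@continuous_comp _ _ _ (fun t0 => (xexp xi (a t0), b t0)) q).
    exact: (cvg_pair (@continuous_comp _ _ _ a (xexp xi) t (ca t) (cont_xexp _ _ xi _)) (cb t)).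
  by apply: (q_cont Hq oD); apply: xpos.
exists p; split; last first.
  exists (fun b => q (xexp xi (reps b), 0)); split.
    have := @descent1 R s Ts Y pis Hpis reps Hrs (fun c => q (xexp xi c, 0)).
    apply.
      by apply: (cqpair _ id (fun _ => 0)); [by move=> x A | exact: cst_continuous].
    by move=> x l; rewrite (qPD l x 0) mulmx0.
  by move=> b; rewrite pq // cc_xexp // Hrs.
split.
  split => //; split.
    by move=> b; exists (q (xexp xi (reps b), 0)); rewrite pq // cc_xexp // Hrs.
  move=> b; exists (pis @` Wc (reps b)); split => //.
    by exists (reps b) => //; apply: Wc_c0.
  by exists (h (reps b)), (g (reps b)); split => //.
exists phi, (h 0); split.
  split.
  - have := @descent1 R k Tk Y pik Hpik repk Hrk (fun w => q (xexp xi 0, w)).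
    apply.
      by apply: (cqpair _ (fun _ => 0) id); [exact: cst_continuous | by move=> x A].
    by move=> x l; rewrite qlat.
  - apply: (continuous_subspaceW _ (ch 0)) => y /= ->.
    by exists 0 => //; apply: Wc_c0.
  - by move=> z; rewrite phig; apply: P4.
  - by move=> y py; rewrite phig -py P3.
move=> i.
pose L (z : Tk) := pik (intmx (mu i) *m repk z).
have cL : continuous L.
  have := @descent1 R k Tk Tk pik Hpik repk Hrk (fun w => pik (intmx (mu i) *m w)).
  apply.
    move=> w; apply: (@continuous_comp _ _ _ (fun w0 => intmx (mu i) *m w0) pik).
      exact: cont_mulmx.
    exact: (pi_cont Hpik _).
  by move=> x l; rewrite mulmxDr -intmxM (pi_lat Hpik).
exists L; split.
  move=> v; rewrite /L.
  have [l ->] := pi_eq Hpik _ _ (esym (Hrk (pik v))).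
  by rewrite mulmxDr -intmxM (pi_lat Hpik).
exists (fun tz : R * Tk => q (xexp xi (tz.1 *: delta_mx i 0), intmx (mu i) *m repk tz.2)).
split.
- have := @descent2 R k Tk R Y pik Hpik repk Hrk unit_interval
    (fun tw => q (xexp xi (tw.1 *: delta_mx i 0), intmx (mu i) *m tw.2)).
  apply; last by move=> t x l; rewrite mulmxDr -intmxM qlat.
  apply: continuous_subspaceT.
  apply: (cqpair _ (fun tw : R * 'cV[R]_k => tw.1 *: delta_mx i 0)
                   (fun tw : R * 'cV[R]_k => intmx (mu i) *m tw.2)).
    move=> tw; apply: (@continuous_comp _ _ _ fst (fun t : R => t *: (delta_mx i 0 : 'cV[R]_s))).
      exact: cont_fst.
    exact: cont_scal.
  move=> tw; apply: (@continuous_comp _ _ _ snd (fun w => intmx (mu i) *m w)).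
    exact: cont_snd.
  exact: cont_mulmx.
- by move=> t z _; rewrite pq // cc_xexp.
- by move=> z; rewrite /= scale1r qtau.
exists (fun tz : R * Tk => L tz.2); split => //.
- apply: continuous_subspaceT => tz.
  apply: (@continuous_comp _ _ _ snd L); [exact: cont_snd | exact: cL].
- move=> z /=; rewrite scale0r hq // /Phih /= cc_xexp //.
  by rewrite rnd0 // oppr0 Pm0 intmx1 mul1mx.
Qed.
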